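(* Let $c^0\in\mathcal{C}$ and $s^0\in\mathcal{S}$ be an incompatible pair, $(c^0,s^0)\notin\mathcal{E}$. Then there exist an integer $h$ with $1\le h\le\min\{I,J\}-1$ and types $c^1,\ldots,c^h\in\mathcal{C}$, $s^1,\ldots,s^h\in\mathcal{S}$ with $(c^i,s^i)\in\mathcal{E}$ for $i=1,\ldots,h$, such that the FCFS matching of the customer sequence $(c^0,c^1,\ldots,c^h)$ with the server sequence $(s^0,s^1,\ldots,s^h)$ is perfect.
   Context: Let $\mathcal{C}=\{c_1,\ldots,c_I\}$ (customer types) and $\mathcal{S}=\{s_1,\ldots,s_J\}$ (server types) be finite sets and $G=(\mathcal{C},\mathcal{S},\mathcal{E})$, $\mathcal{E}\subseteq\mathcal{C}\times\mathcal{S}$, a connected bipartite compatibility graph. Given finite ordered sequences of customer types and server types indexed by the same set, the FCFS matching is the unique complete FCFS matching: a set $A$ of index pairs $(m,n)$ with $(c^m,s^n)\in\mathcal{E}$, each index in at most one pair, with no unmatched compatible pair left, and such that for every $(m,n)\in A$ every $l<n$ with $(c^m,s^l)\in\mathcal{E}$ is matched to some $k<m$ and every $k<m$ with $(c^k,s^n)\in\mathcal{E}$ is matched to some $l<n$. It is perfect if every index is matched. *)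

(* Defs.v *)
From mathcomp Require Import all_boot.
Set Implicit Arguments. Unset Strict Implicit. Unset Printing Implicit Defensive.

Definition bip_rel (C S : finType) (E : C -> S -> bool) : rel (C + S)%type :=
  fun x y => match x, y with
             | inl c, inr s => E c s
             | inr s, inl c => E c s
             | _, _ => false
             end.

Definition bip_connected (C S : finType) (E : C -> S -> bool) : Prop :=
  forall x y : (C + S)%type, connect (bip_rel E) x y.

Definition fcfs_matching (C S : finType) (E : C -> S -> bool) (n : nat)
  (cs : 'I_n -> C) (ss : 'I_n -> S) (A : {set 'I_n * 'I_n}) : Prop :=
  [/\ (forall p, p \in A -> E (cs p.1) (ss p.2)),
      (forall p q, p \in A -> q \in A -> p.1 = q.1 -> p = q),
      (forall p q, p \in A -> q \in A -> p.2 = q.2 -> p = q),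
      (forall m k : 'I_n, E (cs m) (ss k) ->
         (exists l : 'I_n, (m, l) \in A) \/ (exists l : 'I_n, (l, k) \in A))
    &
      (forall m k : 'I_n, (m, k) \in A ->
         (forall l : 'I_n, l < k -> E (cs m) (ss l) -> exists2 j : 'I_n, j < m & (j, l) \in A) /\
         (forall j : 'I_n, j < m -> E (cs j) (ss k) -> exists2 l : 'I_n, l < k & (j, l) \in A))].

Definition perfect_matching (n : nat) (A : {set 'I_n * 'I_n}) : Prop :=
  (forall m : 'I_n, exists k : 'I_n, (m, k) \in A) /\ (forall k : 'I_n, exists m : 'I_n, (m, k) \in A).

(* Main.v *)
Require Import Defs.
From mathcomp Require Import all_boot zify.
Set Implicit Arguments. Unset Strict Implicit. Unset Printing Implicit Defensive.

Definition jp h (j : 'I_h.+1) : nat := if (j:nat) == 0 then h.+1 else j.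

Lemma jp_spec h (j : 'I_h.+1) :
  ((j:nat) = 0 /\ jp j = h.+1) \/ (0 < (j:nat) /\ jp j = (j:nat) /\ (j:nat) <= h).
Proof. rewrite /jp; have := ltn_ord j; case: eqP => Hj; lia. Qed.

Lemma jp_inj h (a b : 'I_h.+1) : jp a = jp b -> a = b.
Proof.
move=> H; apply/ord_inj; have := jp_spec a; have := jp_spec b; lia.
Qed.

Lemma jp_ex h m : 1 <= m <= h.+1 -> exists j : 'I_h.+1, jp j = m.
Proof.
move=> Hm; exists (inord (if m == h.+1 then 0 else m)).
rewrite /jp inordK; last by case: eqP; lia.
case: eqP; case: eqP; lia.
Qed.

Lemma abstract (C S : finType) (E : C -> S -> bool) h (cs : 'I_h.+1 -> C) (ss : 'I_h.+1 -> S)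
  (HE : forall i j, E (cs i) (ss j) = (jp j == ((i:nat)).+1) || (jp j == (i:nat))) :
  (exists A, fcfs_matching E cs ss A) /\ (forall A, fcfs_matching E cs ss A -> perfect_matching A).
Proof.
split.
  exists [set p : 'I_h.+1 * 'I_h.+1 | jp p.2 == (p.1 : nat).+1].
  split.
  - by move=> p; rewrite inE HE => ->.
  - move=> [a b] [c d]; rewrite !inE /= => /eqP H1 /eqP H2 Hac; subst c.
    by rewrite (@jp_inj _ b d) // H1 H2.
  - by move=> [a b] [c d]; rewrite !inE /= => /eqP H1 /eqP H2 Hbd; subst d; congr pair; apply/ord_inj; lia.
  - move=> m k _; left.
    have [l Hl] : exists l : 'I_h.+1, jp l = ((m:nat)).+1 by apply: jp_ex; have := ltn_ord m; lia.
    by exists l; rewrite inE /= Hl.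
  - move=> m k; rewrite inE /= => /eqP Hk; split.
    + move=> l Hlk; rewrite HE => /orP [] /eqP Hl.
      * have := jp_spec l; have := jp_spec k; have := ltn_ord m; lia.
      * have Hm : 0 < (m:nat) by have := jp_spec l; have := jp_spec k; have := ltn_ord m; lia.
        exists (inord ((m:nat)).-1); first by rewrite inordK; have := ltn_ord m; lia.
        by rewrite inE /= inordK; have := ltn_ord m; lia.
    + move=> j Hjm; rewrite HE => /orP [] /eqP Hj; lia.
move=> A [HA1 HA2 HA3 HA4 HA5].
have key : forall n (i l : 'I_h.+1), (i:nat) = n -> jp l = n.+1 -> (i, l) \in A.
  elim => [|n IH] i l Hi Hl.
  - have bad : forall l', (i, l') \in A -> jp l' = 1.
      move=> l' Hil'; move: (HA1 _ Hil'); rewrite HE /= Hi => /orP [] /eqP // H0.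
      by have := jp_spec l'; lia.
    have HEil : E (cs i) (ss l) by rewrite HE Hi Hl eqxx.
    case: (HA4 _ _ HEil) => [[l' Hl']|[j Hj]].
      by have := bad _ Hl'; rewrite -Hl => /jp_inj <-.
    move: (HA1 _ Hj); rewrite HE /= Hl => /orP [] /eqP Hj'.
      by have <- : j = i by apply/ord_inj; lia.
    have Hij : (i:nat) < j by lia.
    have HEil' : E (cs i) (ss l) by rewrite HE Hi Hl eqxx.
    have [_ H2] := HA5 _ _ Hj.
    have [l' Hll' Hil'] := H2 _ Hij HEil'.
    by have := bad _ Hil'; rewrite -Hl => /jp_inj Hq; rewrite Hq ltnn in Hll'.
  - have bad : forall l', (i, l') \in A -> jp l' = n.+2.
      move=> l' Hil'; move: (HA1 _ Hil'); rewrite HE /= Hi => /orP [] /eqP // H0.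
      have Hn : n < h.+1 by have := ltn_ord i; lia.
      have := IH (inord n) l' (inordK Hn) H0 => Hq.
      have := HA3 _ _ Hq Hil' erefl => -[] /(congr1 (@nat_of_ord _)).
      by rewrite inordK // Hi => /eqP; rewrite eqn_leq ltnn andbF.
    have HEil : E (cs i) (ss l).
      by rewrite HE Hi Hl eqxx.
    case: (HA4 _ _ HEil) => [[l' Hl']|[j Hj]].
      by have := bad _ Hl'; rewrite -Hl => /jp_inj <-.
    move: (HA1 _ Hj); rewrite HE /= Hl => /orP [] /eqP Hj'.
      by have <- : j = i by apply/ord_inj; lia.
    have Hij : (i:nat) < j by lia.
    have HEil' : E (cs i) (ss l) by rewrite HE Hi Hl eqxx.
    have [_ H2] := HA5 _ _ Hj.
    have [l' Hll' Hil'] := H2 _ Hij HEil'.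
    by have := bad _ Hil'; rewrite -Hl => /jp_inj Hq; rewrite Hq ltnn in Hll'.
split.
  move=> m.
  have [l Hl] : exists l : 'I_h.+1, jp l = (m:nat).+1 by apply: jp_ex; have := ltn_ord m; lia.
  by exists l; apply: key Hl.
move=> k.
have Hk : (jp k).-1 < h.+1 by have := jp_spec k; lia.
exists (inord (jp k).-1); apply: (key (jp k).-1); first by rewrite inordK.
by have := jp_spec k; lia.
Qed.

Definition reach (T : finType) (e : rel T) (y : T) (k : nat) (v : T) : bool :=
  [exists p : k.-tuple T, path e v p && (last v p == y)].

Lemma reach_cons (T : finType) (e : rel T) y k u v : e u v -> reach e y k v -> reach e y k.+1 u.
Proof.
move=> euv /existsP [p /andP [Hp Hl]]; apply/existsP; exists (cons_tuple v p) => /=.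
by rewrite euv Hp.
Qed.

Lemma reach0 (T : finType) (e : rel T) y v : reach e y 0 v = (v == y).
Proof.
apply/existsP/idP => [[p]|/eqP->]; first by rewrite tuple0.
by exists [tuple]; rewrite /=.
Qed.

Lemma reachS (T : finType) (e : rel T) y k v : reach e y k.+1 v -> exists2 w, e v w & reach e y k w.
Proof.
case/existsP => [[[|w p] //= Hs] /andP [/andP [evw Hp] Hl]].
exists w => //; apply/existsP; exists (@Tuple k _ p Hs); by rewrite /= Hp Hl.
Qed.

Definition dist (T : finType) (e : rel T) y (H : forall v, exists k, reach e y k v) v := ex_minn (H v).

Lemma dist_reach (T : finType) (e : rel T) y H v : reach e y (@dist T e y H v) v.
Proof. by rewrite /dist; case: ex_minnP. Qed.

Lemma dist_min (T : finType) (e : rel T) y H k v : reach e y k v -> @dist T e y H v <= k.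
Proof. by rewrite /dist; case: ex_minnP => m _ Hm; apply: Hm. Qed.

Lemma dist_edge (T : finType) (e : rel T) y H u v : e u v -> @dist T e y H u <= (dist H v).+1.
Proof. by move=> euv; apply: dist_min; apply: reach_cons euv (dist_reach _ _). Qed.

Lemma dist0 (T : finType) (e : rel T) y H v : (@dist T e y H v == 0) = (v == y).
Proof.
apply/idP/idP => [/eqP H0|/eqP ->].
  by have := dist_reach H v; rewrite H0 reach0.
by rewrite -leqn0; apply: dist_min; rewrite reach0.
Qed.

Lemma dist_step (T : finType) (e : rel T) y H v : 0 < @dist T e y H v ->
  exists2 w, e v w & dist H w = (dist H v).-1.
Proof.
move=> Hp; have := dist_reach H v.
case Hd: (dist H v) Hp => [|k] // _ /reachS [w evw Hw].
exists w => //; have := dist_min H Hw; have := dist_edge H evw; rewrite Hd; lia.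
Qed.

Definition nxt (T : finType) (e : rel T) y H v :=
  if [pick w | e v w && (@dist T e y H w == (dist H v).-1)] is Some w then w else v.

Lemma nxt_spec (T : finType) (e : rel T) y H v : 0 < @dist T e y H v ->
  e v (nxt H v) /\ dist H (nxt H v) = (dist H v).-1.
Proof.
move=> Hp; rewrite /nxt; case: pickP => [w /andP [? /eqP ?] | Hn] //.
have [w evw Hw] := dist_step Hp.
by move: (Hn w); rewrite evw Hw eqxx.
Qed.

Lemma walk_dist (T : finType) (e : rel T) y H x i : i <= @dist T e y H x ->
  dist H (iter i (nxt H) x) = dist H x - i.
Proof.
elim: i => [|i IH] Hi; first by rewrite subn0.
rewrite iterS; have [_ ->] := @nxt_spec T e y H (iter i (nxt H) x) ltac:(rewrite IH; lia); rewrite IH; lia.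
Qed.

Lemma walk_edge (T : finType) (e : rel T) y H x i : i < @dist T e y H x ->
  e (iter i (nxt H) x) (iter i.+1 (nxt H) x).
Proof.
move=> Hi; rewrite iterS; apply: (@nxt_spec T e y H _ _).1; rewrite walk_dist; lia.
Qed.

Definition isC (C S : Type) (v : (C + S)%type) : bool := if v is inl _ then true else false.
Definition getC (C S : Type) (c0 : C) (v : (C + S)%type) : C := if v is inl c then c else c0.
Definition getS (C S : Type) (s0 : S) (v : (C + S)%type) : S := if v is inr s then s else s0.

Theorem lemma3p3 (C S : finType) (E : C -> S -> bool)
  (Hconn : bip_connected E) (c0 : C) (s0 : S) (Hinc : ~~ E c0 s0) :
  exists h : nat, 1 <= h <= minn #|C| #|S| - 1 /\
    exists (cs : 'I_h.+1 -> C) (ss : 'I_h.+1 -> S),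
      [/\ cs ord0 = c0, ss ord0 = s0,
          (forall i : 'I_h.+1, 0 < i -> E (cs i) (ss i)),
          (exists A, fcfs_matching E cs ss A)
        & (forall A, fcfs_matching E cs ss A -> perfect_matching A)].
Proof.
pose e := bip_rel E.
pose y : (C + S)%type := inr s0.
have esym : forall u v, e u v = e v u by case=> ? [] ?.
have Hreach : forall v, exists k, reach e y k v.
  move=> v; have /connectP [p Hp Hl] := Hconn v y.
  by exists (size p); apply/existsP; exists (in_tuple p); rewrite /= Hp -Hl eqxx.
pose x : (C + S)%type := inl c0.
pose D := dist Hreach x.
pose w := fun i => iter i (nxt Hreach) x.
have wd : forall i, i <= D -> dist Hreach (w i) = D - i by move=> i Hi; apply: walk_dist.
have we : forall i, i < D -> e (w i) (w i.+1) by move=> i Hi; apply: walk_edge.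
have wpar : forall i, i <= D -> isC (w i) = ~~ odd i.
  elim=> [|i IH] Hi //.
  rewrite oddS -IH; last by apply: ltnW.
  move: (we i Hi); case: (w i) => a; case: (w i.+1) => b //.
have wD : w D = y by apply/eqP; rewrite -(dist0 Hreach) wd // subnn.
have HDodd : odd D by have := wpar D (leqnn D); rewrite wD /=; case: (odd D).
have HD1 : D != 1.
  apply/eqP => HD; have := we 0; rewrite -HD wD => /(_ (leqnn D)) /=.
  by rewrite (negbTE Hinc).
pose h := D./2.
have HD : D = (2 * h).+1 by have := odd_double_half D; rewrite HDodd -/h; lia.
have Hh : 1 <= h by lia.
pose cs := fun i : 'I_h.+1 => getC c0 (w (2 * i)).
pose ss := fun j : 'I_h.+1 => getS s0 (w (2 * jp j).-1).
have hC : forall i : 'I_h.+1, w (2 * i) = inl (cs i).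
  move=> i; have Hi : 2 * i <= D by have := ltn_ord i; lia.
  have := wpar _ Hi; rewrite /cs; case: (w (2 * i)) => //= ?.
  by rewrite oddM.
have hS : forall j : 'I_h.+1, w (2 * jp j).-1 = inr (ss j).
  move=> j; have [k Hk] : exists k, (2 * jp j).-1 = (2 * k).+1.
    by exists (jp j).-1; have := jp_spec j; lia.
  have Hi : (2 * k).+1 <= D by have := jp_spec j; lia.
  have := wpar _ Hi; rewrite /ss Hk; case: (w (2 * k).+1) => //= ?.
  by rewrite oddM.
have HE : forall i j : 'I_h.+1, E (cs i) (ss j) = (jp j == (i : nat).+1) || (jp j == (i : nat)).
  move=> i j.
  have -> : E (cs i) (ss j) = e (w (2 * i)) (w (2 * jp j).-1) by rewrite hC hS.
  have Hj := jp_spec j; have Hi := ltn_ord i.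
  apply/idP/idP.
  - move=> He; have d1 := dist_edge Hreach He; rewrite esym in He.
    have d2 := dist_edge Hreach He.
    have e1 := wd (2 * i) ltac:(lia).
    have e2 := wd (2 * jp j).-1 ltac:(lia).
    rewrite e1 e2 in d1 d2.
    have : jp j = i.+1 \/ jp j = i by lia.
    by case => ->; rewrite eqxx ?orbT.
  - case/orP => /eqP Hji.
      have -> : (2 * jp j).-1 = (2 * i).+1 by lia.
      by apply: we; lia.
    rewrite esym.
    have -> : 2 * i = ((2 * jp j).-1).+1 by lia.
    by apply: we; lia.
have [Hex Hperf] := abstract HE.
have injC : injective cs.
  move=> a b Hab; apply/ord_inj; have := wd (2 * a); have := wd (2 * b).
  rewrite hC hC Hab; have := ltn_ord a; have := ltn_ord b; lia.
have injS : injective ss.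
  move=> a b Hab; apply/jp_inj; have := wd (2 * jp a).-1; have := wd (2 * jp b).-1.
  rewrite hS hS Hab; have := jp_spec a; have := jp_spec b; lia.
have cC := leq_card _ injC; have cS := leq_card _ injS; rewrite card_ord in cC cS.
exists h; split; first lia.
exists cs, ss; split => //.
- have -> : ss ord0 = getS s0 (w D) by rewrite /ss /jp /=; congr (getS s0 (w _)); lia.
  by rewrite wD.
- move=> i Hi; rewrite HE; have -> : jp i = i by have := jp_spec i; lia.
  by rewrite eqxx orbT.
Qed.
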